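(* Let $p,q\ge1$ and $d=p+q$. Assume that $f$ belongs to a finite-dimensional vector subspace $V\subseteq C(\mathbb{R}^d)$ such that $\tau_h(V)\subseteq V$ for all $h\in\mathbb{R}^d$ and $O_A(V)\subseteq V$ for all $A\in\mathbf{O}(p,q)$. Then $f$ is an ordinary polynomial in $d$ real variables.
   Context: $\mathbf{O}(p,q)=\{A\in\mathrm{GL}(d,\mathbb{R}): A^TI_{p,q}A=I_{p,q}\}$, where $I_{p,q}$ is the block-diagonal matrix $\mathrm{diag}(I_p,-I_q)$ (the isometry group of the quadratic form $\sum_{k=1}^px_k^2-\sum_{k=1}^qy_k^2$). For $g\in C(\mathbb{R}^d)$: $\tau_hg(x)=g(x+h)$, $O_Ag(x)=g(Ax)$. *)

(* Defs.v *)
From HB Require Import structures.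
From mathcomp Require Import all_boot all_order all_algebra.
From mathcomp Require Import all_classical all_reals all_analysis.
From mathcomp Require mpoly.
Set Implicit Arguments. Unset Strict Implicit. Unset Printing Implicit Defensive.
Import Order.TTheory GRing.Theory Num.Theory.
Import numFieldNormedType.Exports.
Local Open Scope ring_scope.
Local Open Scope classical_set_scope.

Definition Ipq (R : realType) (p q : nat) : 'M[R]_(p + q) :=
  block_mx 1%:M 0 0 (- 1%:M).

Definition Opq (R : realType) (p q : nat) : set 'M[R]_(p + q) :=
  [set A | A \in unitmx /\ A^T *m Ipq R p q *m A = Ipq R p q].

Definition tau (R : realType) (d : nat) (h : 'cV[R]_d) (g : 'cV[R]_d -> R) :
  'cV[R]_d -> R := fun x => g (x + h).
Definition OA (R : realType) (d : nat) (A : 'M[R]_d) (g : 'cV[R]_d -> R) :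
  'cV[R]_d -> R := fun x => g (A *m x).

Definition is_subspace (R : realType) (d : nat) (V : set ('cV[R]_d -> R)) :=
  V (fun _ => 0) /\
  (forall f g, V f -> V g -> V (fun x => f x + g x)) /\
  (forall (a : R) f, V f -> V (fun x => a * f x)).

Definition finite_dim (R : realType) (d : nat) (V : set ('cV[R]_d -> R)) :=
  exists (n : nat) (b : 'I_n -> ('cV[R]_d -> R)),
    (forall i, V (b i)) /\
    (forall f, V f -> exists c : 'I_n -> R,
       forall x, f x = \sum_(i < n) c i * b i x).

Definition is_polynomial_fun (R : realType) (d : nat) (f : 'cV[R]_d -> R) :=
  exists P : mpoly.mpoly d R, forall x, f x = mpoly.meval (fun i => x i 0) P.

(* Main.v *)
Require Import Defs.
From HB Require Import structures.
From mathcomp Require Import zify.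
From mathcomp Require Import all_boot all_order all_algebra.
From mathcomp Require Import mpoly.
From mathcomp Require Import all_classical all_reals all_analysis.
From mathcomp Require Import ring lra.
From mathcomp Require Import complex.
Set Implicit Arguments. Unset Strict Implicit. Unset Printing Implicit Defensive.
Import Order.TTheory GRing.Theory Num.Theory.
Import numFieldNormedType.Exports.
Local Open Scope ring_scope.

Definition polyT (R : realType) (V : zmodType) (P : {poly R}) (h : V)
  (g : V -> R) : V -> R :=
  fun x => \sum_(i < size P) P`_i * g (x + h *+ i).

Lemma polyT_widen (R : realType) (V : zmodType) (P : {poly R}) h (g : V -> R) x N :
  (size P <= N)%N -> polyT P h g x = \sum_(i < N) P`_i * g (x + h *+ i).
Proof.
move=> le; rewrite /polyT (big_ord_widen N (fun i => P`_i * g (x + h *+ i)) le).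
rewrite big_mkcond /=; apply: eq_bigr => i _; case: ifP => // /negbT.
by rewrite -leqNgt => hi; rewrite nth_default // mul0r.
Qed.

Lemma polyTD (R : realType) (V : zmodType) (P Q : {poly R}) h (g : V -> R) x :
  polyT (P + Q) h g x = polyT P h g x + polyT Q h g x.
Proof.
set N := maxn (size P) (size Q).
rewrite (@polyT_widen _ _ (P + Q) _ _ _ N) ?size_polyD //.
rewrite (@polyT_widen _ _ P _ _ _ N) ?leq_maxl // (@polyT_widen _ _ Q _ _ _ N) ?leq_maxr //.
by rewrite -big_split /=; apply: eq_bigr => i _; rewrite coefD mulrDl.
Qed.

Lemma polyTB (R : realType) (V : zmodType) (P Q : {poly R}) h (g : V -> R) x :
  polyT (P - Q) h g x = polyT P h g x - polyT Q h g x.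
Proof.
set N := maxn (size P) (size Q).
rewrite (@polyT_widen _ _ (P - Q) _ _ _ N); last by rewrite (leq_trans (size_polyD _ _)) // size_polyN.
rewrite (@polyT_widen _ _ P _ _ _ N) ?leq_maxl // (@polyT_widen _ _ Q _ _ _ N) ?leq_maxr //.
by rewrite -sumrB /=; apply: eq_bigr => i _; rewrite coefB mulrBl.
Qed.

Lemma polyTZ (R : realType) (V : zmodType) (P : {poly R}) c h (g : V -> R) x :
  polyT (c *: P) h g x = c * polyT P h g x.
Proof.
rewrite (@polyT_widen _ _ (c *: P) _ _ _ (size P)) ?size_scale_leq //.
by rewrite /polyT mulr_sumr; apply: eq_bigr => i _; rewrite coefZ mulrA.
Qed.

Lemma polyTC (R : realType) (V : zmodType) (c : R) h (g : V -> R) x :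
  polyT c%:P h g x = c * g x.
Proof.
rewrite (@polyT_widen _ _ c%:P _ _ _ 1) ?size_polyC ?leq_b1 //.
by rewrite big_ord1 coefC /= mulr0n addr0.
Qed.

Lemma polyT0 (R : realType) (V : zmodType) h (g : V -> R) x :
  polyT 0 h g x = 0.
Proof. by rewrite /polyT size_poly0 big_ord0. Qed.

Lemma polyT_g0 (R : realType) (V : zmodType) (P : {poly R}) (h : V) x :
  polyT P h (fun _ => 0) x = 0.
Proof. by rewrite /polyT big1 // => i _; rewrite mulr0. Qed.

Lemma polyT_gsum (R : realType) (V : zmodType) (P : {poly R}) (h : V) m
   (c : 'I_m -> R) (b : 'I_m -> V -> R) x :
  polyT P h (fun y => \sum_(j < m) c j * b j y) x = \sum_(j < m) c j * polyT P h (b j) x.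
Proof.
rewrite /polyT; under eq_bigr do rewrite mulr_sumr.
rewrite exchange_big /=; apply: eq_bigr => j _; rewrite mulr_sumr.
by apply: eq_bigr => i _; rewrite mulrCA.
Qed.

Lemma polyT_gD (R : realType) (V : zmodType) (P : {poly R}) (h : V) g1 g2 x :
  polyT P h (fun y => g1 y + g2 y) x = polyT P h g1 x + polyT P h g2 x.
Proof. by rewrite /polyT -big_split; apply: eq_bigr => i _; rewrite mulrDr. Qed.

Lemma polyT_gB (R : realType) (V : zmodType) (P : {poly R}) (h : V) g1 g2 x :
  polyT P h (fun y => g1 y - g2 y) x = polyT P h g1 x - polyT P h g2 x.
Proof. by rewrite /polyT -sumrB; apply: eq_bigr => i _; rewrite mulrBr. Qed.

Lemma polyT_gZ (R : realType) (V : zmodType) (P : {poly R}) (h : V) a g x :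
  polyT P h (fun y => a * g y) x = a * polyT P h g x.
Proof. by rewrite /polyT mulr_sumr; apply: eq_bigr => i _; rewrite mulrCA. Qed.

Lemma polyT_tau (R : realType) (V : zmodType) (P : {poly R}) (h k : V) (g : V -> R) x :
  polyT P h (fun y => g (y + k)) x = polyT P h g (x + k).
Proof. by rewrite /polyT; apply: eq_bigr => i _; rewrite addrAC. Qed.

Lemma polyTMX (R : realType) (V : zmodType) (Q : {poly R}) (h : V) (g : V -> R) x :
  polyT (Q * 'X) h g x = polyT Q h (fun y => g (y + h)) x.
Proof.
have [->|Q0] := eqVneq Q 0; first by rewrite mul0r !polyT0.
rewrite /polyT size_mulX // big_ord_recl coefMX /= mul0r add0r.
apply: eq_bigr => i _; rewrite coefMX /= /bump /= add1n /=.
by rewrite mulrSr addrA.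
Qed.

Lemma polyTM (R : realType) (V : zmodType) (P Q : {poly R}) (h : V) (g : V -> R) x :
  polyT (P * Q) h g x = polyT P h (polyT Q h g) x.
Proof.
elim/poly_ind: P Q g x => [|P c IH] Q g x; first by rewrite mul0r !polyT0.
rewrite mulrDl -mulrA -(commr_polyX Q) polyTD IH polyTD polyTMX polyTC mul_polyC polyTZ.
congr (_ + _); congr (polyT _ _ _ _); apply/funext => y.
by rewrite polyTMX polyT_tau.
Qed.

Lemma polyT_mulXn (R : realType) (V : zmodType) (Q : {poly R}) (h : V) m (g : V -> R) x :
  polyT (Q * 'X^m) h g x = polyT Q h (fun y => g (y + h *+ m)) x.
Proof.
elim: m g => [|m IH] g.
  rewrite expr0 mulr1; congr (polyT _ _ _ _); apply/funext => y.
  by rewrite mulr0n addr0.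
rewrite exprSr mulrA polyTMX IH; congr (polyT _ _ _ _); apply/funext => y.
by rewrite mulrSr addrA.
Qed.

Lemma polyT_compXn (R : realType) (V : zmodType) (P : {poly R}) (h : V) m (g : V -> R) x :
  polyT P (h *+ m) g x = polyT (P \Po 'X^m) h g x.
Proof.
elim/poly_ind: P g x => [|P c IH] g x; first by rewrite comp_poly0 !polyT0.
rewrite comp_polyD comp_polyM comp_polyX comp_polyC !polyTD !polyTC.
by rewrite polyTMX IH polyT_mulXn.
Qed.

Definition Dop (R : realType) (V : zmodType) (a : V) (g : V -> R) : V -> R :=
  fun x => g (x + a) - g x.
Definition iterD (R : realType) (V : zmodType) N (a : V) (g : V -> R) := iter N (Dop a) g.

Lemma polyT_XsubC1 (R : realType) (V : zmodType) (a : V) (g : V -> R) x :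
  polyT ('X - 1) a g x = Dop a g x.
Proof.
rewrite /polyT -polyC1 size_XsubC !big_ord_recl big_ord0 /= !coefB !coefX !coefC /=.
rewrite /Dop /bump /= mulr0n addr0 mulr1n subr0 mul1r sub0r mulN1r addr0.
by rewrite addrC.
Qed.

Lemma iterD_polyT (R : realType) (V : zmodType) N (a : V) (g : V -> R) x :
  iterD N a g x = polyT (('X - 1) ^+ N) a g x.
Proof.
elim: N x => [|N IH] x; first by rewrite expr0 -polyC1 polyTC mul1r.
rewrite exprS polyTM polyT_XsubC1 /iterD iterS /Dop.
by rewrite -!/(iterD _ _ _) !IH.
Qed.
Lemma iterD_D (R : realType) (V : zmodType) N (a : V) (g : V -> R) :
  iterD N.+1 a g = iterD N a (Dop a g).
Proof. by rewrite /iterD iterSr. Qed.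

Lemma Dop_comm (R : realType) (V : zmodType) (a b : V) (g : V -> R) :
  Dop a (Dop b g) = Dop b (Dop a g).
Proof.
apply/funext => x; rewrite /Dop (addrAC x a b).
set u := g (x + b + a); set v := g (x + a); set w := g (x + b); set z := g x.
by ring.
Qed.

Lemma iterD_Dcomm (R : realType) (V : zmodType) N (a b : V) (g : V -> R) :
  iterD N a (Dop b g) = Dop b (iterD N a g).
Proof.
elim: N g => [|N IH] g //=.
by rewrite /iterD /= -/(iterD _ _ _) IH Dop_comm.
Qed.

Lemma iterD_tau (R : realType) (V : zmodType) N (a c : V) (g : V -> R) :
  iterD N a (fun x => g (x + c)) = fun x => iterD N a g (x + c).
Proof.
elim: N => [|N IH] //=.
rewrite /iterD /= -/(iterD _ _ _) IH; apply/funext => x; rewrite /Dop.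
by rewrite addrAC.
Qed.

Lemma iterD_add (R : realType) (V : zmodType) N (a : V) (g1 g2 : V -> R) :
  iterD N a (fun x => g1 x + g2 x) = fun x => iterD N a g1 x + iterD N a g2 x.
Proof.
elim: N => [|N IH] //=.
rewrite /iterD /= -!/(iterD _ _ _) IH; apply/funext => x; rewrite /Dop.
by rewrite addrACA opprD.
Qed.

Lemma iterD_sub (R : realType) (V : zmodType) N (a : V) (g1 g2 : V -> R) :
  iterD N a (fun x => g1 x - g2 x) = fun x => iterD N a g1 x - iterD N a g2 x.
Proof.
elim: N => [|N IH] //=.
rewrite /iterD /= -!/(iterD _ _ _) IH; apply/funext => x; rewrite /Dop.
by ring.
Qed.

Lemma iterD_0 (R : realType) (V : zmodType) N (a : V) :
  iterD N a (fun _ : V => (0 : R)) = fun _ => 0.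
Proof.
elim: N => [|N IH] //=.
by rewrite /iterD /= -!/(iterD _ _ _) IH; apply/funext => x; rewrite /Dop subr0.
Qed.

Lemma iterD_addn (R : realType) (V : zmodType) N M (a : V) (g : V -> R) :
  iterD (N + M) a g = iterD N a (iterD M a g).
Proof. by rewrite /iterD ssrnat.iterD. Qed.

Lemma Dop_add (R : realType) (V : zmodType) (a b : V) (g : V -> R) :
  Dop (a + b) g = fun x => Dop b g (x + a) + Dop a g x.
Proof.
apply/funext => x; rewrite /Dop addrA.
by rewrite addrA subrK.
Qed.

Lemma iterD_comb (R : realType) (V : zmodType) (a b : V) N M (g : V -> R) :
  iterD N a g = (fun _ => 0) -> iterD M b g = (fun _ => 0) ->
  iterD (N + M) (a + b) g = (fun _ => 0).
Proof.
elim: N M g => [|N IHN] M g.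
  move=> h0 _; have -> : g = (fun _ => 0) by exact: h0.
  by rewrite iterD_0.
elim: M g => [|M IHM] g.
  move=> _ h0; have -> : g = (fun _ => 0) by exact: h0.
  by rewrite iterD_0.
move=> hN hM.
rewrite addSn iterD_D Dop_add iterD_add.
have h1 : iterD (N + M.+1) (a + b) (fun x => Dop b g (x + a)) = fun _ => 0.
  rewrite iterD_tau addnS -addSn IHM //.
  - by rewrite iterD_Dcomm hN; apply/funext => x; rewrite /Dop subr0.
  - by rewrite -iterD_D hM.
have h2 : iterD (N + M.+1) (a + b) (Dop a g) = fun _ => 0.
  rewrite IHN //.
  - by rewrite -iterD_D.
  - by rewrite iterD_Dcomm hM; apply/funext => x; rewrite /Dop subr0.
by rewrite h1 h2; apply/funext => x; rewrite addr0.
Qed.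

Definition Ann (R : realType) (W : zmodType) (S : set (W -> R)) (h : W) (P : {poly R}) :=
  forall g, S g -> forall x, polyT P h g x = 0.

Lemma Ann_mull (R : realType) (W : zmodType) (S : set (W -> R)) h (Q M : {poly R}) :
  Ann S h M -> Ann S h (Q * M).
Proof.
move=> hM g Sg x; rewrite polyTM.
have -> : polyT M h g = fun _ => 0 by apply/funext => y; exact: hM.
exact: polyT_g0.
Qed.

Lemma Ann_sub (R : realType) (W : zmodType) (S : set (W -> R)) h (P Q : {poly R}) :
  Ann S h P -> Ann S h Q -> Ann S h (P - Q).
Proof. by move=> hP hQ g Sg x; rewrite polyTB hP // hQ // subr0. Qed.

Lemma Ann_dvd (R : realType) (W : zmodType) (S : set (W -> R)) h (M P : {poly R}) :
  Ann S h M -> M %| P -> Ann S h P.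
Proof. by move=> hM /divpK <-; apply: Ann_mull. Qed.

Lemma Ann_exists (R : realType) (W : zmodType) (S : set (W -> R)) (h : W) :
  (exists n (b : 'I_n -> W -> R), (forall i, S (b i)) /\
     (forall f, S f -> exists c : 'I_n -> R, forall x, f x = \sum_(i < n) c i * b i x)) ->
  (forall g, S g -> S (fun x => g (x + h))) ->
  exists P, P != 0 /\ Ann S h P.
Proof.
move=> [n [b [Sb spanb]]] Htau.
pose b' (i : 'I_n.+1) : W -> R := if unlift ord0 i is Some j then b j else (fun _ => 0).
have span' : forall f, S f -> exists c : 'I_n.+1 -> R,
    forall x, f x = \sum_(i < n.+1) c i * b' i x.
  move=> f /spanb [c hc]; exists (fun i => if unlift ord0 i is Some j then c j else 0).
  move=> x; rewrite big_ord_recl /b' unlift_none mul0r add0r hc.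
  by apply: eq_bigr => i _; rewrite liftK.
have hC : forall j : 'I_n.+1, exists c : 'I_n.+1 -> R,
    forall x, b' j (x + h) = \sum_(i < n.+1) c i * b' i x.
  move=> j; rewrite /b'; case: (unlift ord0 j) => [j'|].
    by apply: span'; apply: Htau.
  by exists (fun _ => 0) => x; rewrite big1 // => i _; rewrite mul0r.
have [C HC] := boolp.choice hC.
pose M : 'M[R]_n.+1 := \matrix_(j, i) C j i.
have key : forall P j x, polyT P h (b' j) x =
    \sum_(i < n.+1) (horner_mx M P) j i * b' i x.
  elim/poly_ind => [|P c IH] j x.
    by rewrite polyT0 rmorph0 big1 // => i _; rewrite mxE mul0r.
  rewrite polyTD polyTC polyTMX.
  have -> : (fun y => b' j (y + h)) = fun y => \sum_(k < n.+1) C j k * b' k y.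
    by apply/funext => y; rewrite HC.
  rewrite polyT_gsum (commr_polyX P) rmorphD rmorphM /= horner_mx_X horner_mx_C.
  under eq_bigr do rewrite IH.
  transitivity (\sum_(i < n.+1) (\sum_(k < n.+1) M j k * horner_mx M P k i) * b' i x
      + c * b' j x).
    congr (_ + _); rewrite (eq_bigr (fun k => \sum_(i < n.+1) M j k * horner_mx M P k i * b' i x)).
      rewrite exchange_big /=; apply: eq_bigr => i _; rewrite mulr_suml //.
    by move=> k _; rewrite mulr_sumr mxE; apply: eq_bigr => i _; rewrite mulrA.
  symmetry; rewrite (eq_bigr (fun i => (\sum_(k < n.+1) M j k * horner_mx M P k i) * b' i x
     + (c *+ (j == i)) * b' i x)); last first.
    by move=> i _; rewrite -mulmxE !mxE mulrDl.
  rewrite big_split /=; congr (_ + _).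
  rewrite (bigD1 j) //= eqxx mulr1n big1 ?addr0 // => i ij.
  by rewrite eq_sym (negbTE ij) mulr0n mul0r.
exists (char_poly M); split; first by apply: monic_neq0; apply: char_poly_monic.
move=> g /span' [c hc] x.
have -> : g = fun y => \sum_(i < n.+1) c i * b' i y by apply/funext => y; rewrite hc.
rewrite polyT_gsum big1 // => i _; rewrite key Cayley_Hamilton big1 ?mulr0 // => k _.
by rewrite mxE mul0r.
Qed.

Lemma Ann_min (R : realType) (W : zmodType) (S : set (W -> R)) (h : W) :
  (exists P, P != 0 /\ Ann S h P) ->
  exists mu, [/\ mu != 0, Ann S h mu & forall P, P != 0 -> Ann S h P -> (size mu <= size P)%N].
Proof.
move=> ex.
have exn : exists k, `[< exists P, [/\ P != 0, Ann S h P & size P = k] >].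
  by case: ex => P [P0 AP]; exists (size P); apply/asboolP; exists P.
case: (ex_minnP exn) => k /asboolP [mu [mu0 Amu smu]] kmin.
exists mu; split => // P P0 AP; rewrite smu; apply: kmin; apply/asboolP; by exists P.
Qed.

Lemma Ann_min_dvd (R : realType) (W : zmodType) (S : set (W -> R)) (h : W) mu :
  mu != 0 -> Ann S h mu -> (forall P, P != 0 -> Ann S h P -> (size mu <= size P)%N) ->
  forall P, Ann S h P -> mu %| P.
Proof.
move=> mu0 Amu mumin P AP; rewrite /dvdp; apply/eqP.
have Am : Ann S h (P %% mu).
  have -> : P %% mu = P - P %/ mu * mu by rewrite {2}(divp_eq P mu) addrAC subrr add0r.
  by apply: Ann_sub => //; apply: Ann_mull.
apply/eqP; apply: contraT => m0.
by have := mumin _ m0 Am; rewrite leqNgt ltn_modp mu0.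
Qed.

Lemma Ann_min_coef0 (R : realType) (W : zmodType) (S : set (W -> R)) (h : W) mu :
  (forall k g, S g -> S (fun x => g (x + k))) ->
  mu != 0 -> Ann S h mu -> (forall P, P != 0 -> Ann S h P -> (size mu <= size P)%N) ->
  mu`_0 != 0.
Proof.
move=> Htau mu0 Amu mumin; apply: contraT; rewrite negbK => /eqP c0.
have r0 : root mu 0 by rewrite /root horner_coef0 c0.
have := r0; rewrite -dvdp_XsubCl subr0 => dX.
set mu' := mu %/ 'X.
have emu : mu = mu' * 'X by rewrite divpK.
have mu'0 : mu' != 0 by apply: contraNneq mu0 => e; rewrite emu e mul0r.
have Amu' : Ann S h mu'.
  move=> g Sg x.
  have e : polyT mu' h g x = polyT (mu' * 'X) h (fun z => g (z + - h)) x.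
    by rewrite polyTMX; congr (polyT _ _ _ _); apply/funext => y; rewrite addrK.
  by rewrite e -emu; apply: Amu; apply: Htau.
have := mumin _ mu'0 Amu'; rewrite emu size_mulX // ltnn //.
Qed.

Lemma root_unity_pigeon (F : fieldType) (z : F) (rs : seq F) :
  z != 0 -> (forall m, (0 < m)%N -> z ^+ m \in rs) -> z ^+ (size rs)`! = 1.
Proof.
move=> z0 hm.
set s := [seq z ^+ i.+1 | i <- iota 0 (size rs).+1].
have : ~~ uniq s.
  apply/negP => us; have := uniq_leq_size us.
  have sub : {subset s <= rs} by move=> y /mapP [i _ ->]; apply: hm.
  by move/(_ rs sub); rewrite size_map size_iota ltnn.
case/(uniqPn 0) => i [j [ij js]].
rewrite size_map size_iota in js.
rewrite !(nth_map 0%N) ?size_iota ?(ltn_trans ij) // !nth_iota ?(ltn_trans ij) // !add0n.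
move=> e.
have ez : z ^+ (j - i) = 1.
  have : z ^+ i.+1 * z ^+ (j - i) = z ^+ i.+1 * 1.
    by rewrite -exprD mulr1 addSn subnKC ?(ltnW ij) // e.
  by move/(mulfI (expf_neq0 _ z0)).
have /dvdnP [k ->] : (j - i %| (size rs)`!)%N.
  apply: dvdn_fact; rewrite subn_gt0 ij /=.
  by rewrite (leq_trans (leq_subr _ _)) // -ltnS.
by rewrite mulnC exprM ez expr1n.
Qed.

Lemma prod_XsubC_dvd (F : fieldType) (rs : seq F) K :
  (forall z, z \in rs -> z ^+ K = 1) ->
  \prod_(z <- rs) ('X - z%:P) %| ('X^K - 1) ^+ (size rs).
Proof.
elim: rs => [|z rs IH] h; first by rewrite big_nil expr0 dvdpp.
rewrite big_cons /= exprS; apply: dvdp_mul.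
  rewrite dvdp_XsubCl /root !hornerE h ?mem_head // subrr //.
by apply: IH => y yr; apply: h; rewrite in_cons yr orbT.
Qed.

Lemma unipotent_div (R : realType) (mu : {poly R}) :
  mu != 0 -> mu`_0 != 0 -> (forall m, (0 < m)%N -> mu %| mu \Po 'X^m) ->
  exists K r, (0 < K)%N /\ mu %| ('X^K - 1) ^+ r.
Proof.
move=> mu0 c0 hdiv.
pose f := real_complex R.
pose muC := map_poly f mu.
have [rs Hrs] := closed_field_poly_normal muC.
have lc0 : lead_coef muC != 0.
  by rewrite lead_coef_map fmorph_eq0 lead_coef_eq0.
have inrs : forall z, root muC z = (z \in rs).
  by move=> z; rewrite Hrs rootZ // root_prod_XsubC.
exists (size rs)`!, (size rs); split; first exact: fact_gt0.
rewrite -(dvdp_map f) rmorphXn rmorphB /= map_polyXn rmorph1.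
rewrite -/muC Hrs dvdpZl //; apply: prod_XsubC_dvd => z zr.
apply: root_unity_pigeon.
  apply: contraTneq zr => ->; rewrite -inrs /root horner_coef0 coef_map /=.
  by rewrite fmorph_eq0.
move=> m m0; rewrite -inrs.
have dC : muC %| muC \Po 'X^m.
  by rewrite /muC -(map_polyXn f) -map_comp_poly dvdp_map hdiv.
have rz : root muC z by rewrite inrs.
have := root_dvdp dC rz.
by rewrite /root horner_comp hornerXn.
Qed.

Definition epsq (R : realType) (p q : nat) (k : 'I_(p + q)) : R :=
  if (k < p)%N then 1 else -1.

Lemma Ipq_entry (R : realType) p q (i j : 'I_(p + q)) :
  Ipq R p q i j = (i == j)%:R * @epsq R p q i.
Proof.
rewrite /Ipq /epsq; case: (split_ordP i) => i' ->; case: (split_ordP j) => j' ->.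
- by rewrite block_mxEul mxE /= eq_lshift mulr1.
- by rewrite block_mxEur mxE /= eq_shift mulr1.
- by rewrite block_mxEdl mxE /= eq_sym eq_shift mul0r.
- by rewrite block_mxEdr !mxE /= eq_rshift mulrN1.
Qed.

Lemma Ipq_delta_l (R : realType) p q (k l : 'I_(p + q)) :
  Ipq R p q *m delta_mx k l = @epsq R p q k *: delta_mx k l.
Proof.
apply/matrixP => i j; rewrite mxE; under eq_bigr do rewrite Ipq_entry.
rewrite !mxE (bigD1 k) //= big1 ?addr0; last first.
  by move=> m mk; rewrite mxE (negbTE mk) mulr0.
rewrite mxE eqxx /=; case: (eqVneq i k) => [->|ik] /=.
  by rewrite mul1r mulrC.
by rewrite !mul0r mulr0.
Qed.

Lemma Ipq_delta_r (R : realType) p q (k l : 'I_(p + q)) :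
  delta_mx k l *m Ipq R p q = @epsq R p q l *: delta_mx k l.
Proof.
apply/matrixP => i j; rewrite mxE; under eq_bigr do rewrite Ipq_entry.
rewrite !mxE (bigD1 l) //= big1 ?addr0; last first.
  by move=> m ml; rewrite mxE (negbTE ml) andbF mul0r.
rewrite mxE eqxx andbT; case: (eqVneq l j) => [->|lj] /=.
  by rewrite mul1r andbT mulrC.
by rewrite mul0r andbF !mulr0.
Qed.

Definition Pm (R : realType) n (I J : 'I_n) : 'M[R]_n := delta_mx I I + delta_mx J J.
Definition Qm (R : realType) n (I J : 'I_n) : 'M[R]_n := delta_mx I J + delta_mx J I.
Definition Bst (R : realType) n (I J : 'I_n) (a s : R) : 'M[R]_n :=
  1%:M + a *: @Pm R _ I J + s *: @Qm R _ I J.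

Lemma PmPm (R : realType) n (I J : 'I_n) : I != J -> @Pm R _ I J *m @Pm R _ I J = @Pm R _ I J.
Proof.
move=> IJ; rewrite /Pm !mulmxDl !mulmxDr !mul_delta_mx_cond !eqxx (negbTE IJ) eq_sym (negbTE IJ) /=.
by rewrite !mulr0n !mulr1n addr0 add0r.
Qed.
Lemma PmQm (R : realType) n (I J : 'I_n) : I != J -> @Pm R _ I J *m @Qm R _ I J = @Qm R _ I J.
Proof.
move=> IJ; rewrite /Pm /Qm !mulmxDl !mulmxDr !mul_delta_mx_cond !eqxx (negbTE IJ) eq_sym (negbTE IJ) /=.
by rewrite !mulr0n !mulr1n addr0 add0r.
Qed.
Lemma QmPm (R : realType) n (I J : 'I_n) : I != J -> @Qm R _ I J *m @Pm R _ I J = @Qm R _ I J.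
Proof.
move=> IJ; rewrite /Pm /Qm !mulmxDl !mulmxDr !mul_delta_mx_cond !eqxx (negbTE IJ) eq_sym (negbTE IJ) /=.
by rewrite !mulr0n !mulr1n addr0 add0r.
Qed.
Lemma QmQm (R : realType) n (I J : 'I_n) : I != J -> @Qm R _ I J *m @Qm R _ I J = @Pm R _ I J.
Proof.
move=> IJ; rewrite /Pm /Qm !mulmxDl !mulmxDr !mul_delta_mx_cond !eqxx (negbTE IJ) eq_sym (negbTE IJ) /=.
by rewrite !mulr0n !mulr1n addr0 add0r addrC.
Qed.

Lemma Bst_mul (R : realType) n (I J : 'I_n) a s a' s' : I != J ->
  @Bst R _ I J a s *m @Bst R _ I J a' s' =
  @Bst R _ I J (a + a' + a * a' + s * s') (s + s' + a * s' + s * a').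
Proof.
move=> IJ; rewrite /Bst !mulmxDl !mulmxDr !mul1mx !mulmx1 -!scalemxAl -!scalemxAr !scalerA.
rewrite PmPm // PmQm // QmPm // QmQm //.
by apply/matrixP => i j; rewrite !mxE; ring.
Qed.

Lemma Bst00 (R : realType) n (I J : 'I_n) : @Bst R _ I J 0 0 = 1%:M.
Proof. by rewrite /Bst !scale0r !addr0. Qed.

Lemma Bst_tr (R : realType) n (I J : 'I_n) a s : (@Bst R _ I J a s)^T = @Bst R _ I J a s.
Proof.
apply/matrixP => i j; rewrite /Bst /Pm /Qm !mxE.
rewrite (eq_sym j i) [(j == I) && _]andbC [(j == J) && _]andbC.
by rewrite [((j == I) && _)]andbC [((j == J) && _)]andbC; ring.
Qed.

Lemma Bst_Ipq (R : realType) p q (I J : 'I_(p + q)) a s :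
  (I < p)%N -> ~~ (J < p)%N ->
  @Bst R _ I J a s *m Ipq R p q = Ipq R p q *m @Bst R _ I J a (- s).
Proof.
move=> Ip Jp.
rewrite /Bst /Pm /Qm !mulmxDl !mulmxDr !mul1mx !mulmx1 -!scalemxAl -!scalemxAr.
rewrite !mulmxDl !mulmxDr !Ipq_delta_l !Ipq_delta_r /epsq Ip (negbTE Jp).
by apply/matrixP => i j; rewrite !mxE; ring.
Qed.

Lemma Bst_Opq (R : realType) p q (I J : 'I_(p + q)) a s :
  (I < p)%N -> ~~ (J < p)%N -> a + a + a * a - s * s = 0 ->
  @Opq R p q (@Bst R _ I J a s).
Proof.
move=> Ip Jp H.
have IJ : I != J by apply: contraTneq Ip => ->.
split.
  have : @Bst R _ I J a s *m @Bst R _ I J a (- s) = 1%:M.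
    rewrite Bst_mul //.
    have -> : a + a + a * a + s * - s = 0 by rewrite -H; ring.
    have -> : s + - s + a * - s + s * a = 0 by ring.
    exact: Bst00.
  by case/mulmx1_unit.
rewrite Bst_tr Bst_Ipq // -mulmxA Bst_mul //.
have -> : a + a + a * a + - s * s = 0 by rewrite -H; ring.
have -> : - s + s + a * s + - s * a = 0 by ring.
by rewrite Bst00 mulmx1.
Qed.

Definition nullok (R : realType) p q (v : 'cV[R]_(p + q)) :=
  forall lam : R, 0 < lam -> exists B B', [/\ @Opq R p q B, @Opq R p q B',
    B' *m B = 1%:M & B *m v = lam *: v].

Lemma nullok_opp (R : realType) p q (v : 'cV[R]_(p + q)) : nullok v -> nullok (- v).
Proof.
move=> h lam l0; have [B [B' [H1 H2 H3 H4]]] := h lam l0.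
by exists B, B'; split => //; rewrite mulmxN H4 scalerN.
Qed.

Definition lama (R : realType) (lam : R) := (lam + lam^-1) / 2 - 1.
Definition lams (R : realType) (lam : R) := (lam - lam^-1) / 2.

Lemma lam_H (R : realType) (lam : R) : lam != 0 ->
  lama lam + lama lam + lama lam * lama lam - lams lam * lams lam = 0.
Proof. by move=> l0; rewrite /lama /lams; field. Qed.

Lemma lam_inv (R : realType) (lam : R) : lam != 0 ->
  lama lam^-1 = lama lam /\ lams lam^-1 = - lams lam.
Proof. by move=> l0; rewrite /lama /lams invrK; split; field. Qed.

Lemma Bst_vec (R : realType) n (I J : 'I_n) a s (sg : R) : I != J -> sg * sg = 1 ->
  @Bst R _ I J a s *m (delta_mx I 0 + sg *: delta_mx J 0 : 'cV[R]_n) =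
  (1 + a + sg * s) *: (delta_mx I 0 + sg *: delta_mx J 0 : 'cV[R]_n).
Proof.
move=> IJ hs; rewrite /Bst /Pm /Qm !mulmxDl !mul1mx -!scalemxAl !mulmxDr -!scalemxAr.
rewrite !mulmxDl !mul_delta_mx_cond !eqxx (negbTE IJ) eq_sym (negbTE IJ) /=.
apply/matrixP => i j; rewrite !mxE /=.
have e : forall x : R, sg * (sg * x) = x by move=> x; rewrite mulrA hs mul1r.
set u := ((i == I) && (j == 0))%:R; set w := ((i == J) && (j == 0))%:R.
rewrite !addr0 !add0r.
have -> : s * (w + sg * u) = sg * s * u + s * (sg * (sg * w)) by rewrite e; ring.
ring.
Qed.

Lemma nullok_u (R : realType) p q (I J : 'I_(p + q)) :
  (I < p)%N -> ~~ (J < p)%N -> nullok (delta_mx I 0 + 1 *: delta_mx J 0 : 'cV[R]_(p + q)).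
Proof.
move=> Ip Jp lam l0.
have IJ : I != J by apply: contraTneq Ip => ->.
have l0' : lam != 0 by rewrite gt_eqF.
exists (@Bst R _ I J (lama lam) (lams lam)), (@Bst R _ I J (lama lam^-1) (lams lam^-1)).
have [ea es] := lam_inv l0'.
split.
- by apply: Bst_Opq => //; apply: lam_H.
- by apply: Bst_Opq => //; apply: lam_H; rewrite invr_eq0.
- rewrite ea es Bst_mul //.
  have -> : lama lam + lama lam + lama lam * lama lam + - lams lam * lams lam = 0.
    by rewrite -(lam_H l0'); ring.
  have -> : - lams lam + lams lam + lama lam * lams lam + - lams lam * lama lam = 0 by ring.
  exact: Bst00.
- rewrite Bst_vec ?mulr1 //; congr (_ *: _); rewrite /lama /lams; field; exact: l0'.
Qed.

Lemma nullok_w (R : realType) p q (I J : 'I_(p + q)) :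
  (I < p)%N -> ~~ (J < p)%N -> nullok (delta_mx I 0 + (-1) *: delta_mx J 0 : 'cV[R]_(p + q)).
Proof.
move=> Ip Jp lam l0.
have IJ : I != J by apply: contraTneq Ip => ->.
have l0' : lam != 0 by rewrite gt_eqF.
exists (@Bst R _ I J (lama lam^-1) (lams lam^-1)), (@Bst R _ I J (lama lam) (lams lam)).
have [ea es] := lam_inv l0'.
split.
- by apply: Bst_Opq => //; apply: lam_H; rewrite invr_eq0.
- by apply: Bst_Opq => //; apply: lam_H.
- rewrite ea es Bst_mul //.
  have -> : lama lam + lama lam + lama lam * lama lam + lams lam * - lams lam = 0.
    by rewrite -(lam_H l0'); ring.
  have -> : lams lam + - lams lam + lama lam * - lams lam + lams lam * lama lam = 0 by ring.
  exact: Bst00.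
- rewrite Bst_vec ?mulrN1 ?opprK ?mulr1 //; congr (_ *: _); rewrite /lama /lams invrK; field; exact: l0'.
Qed.

Lemma mulmxMn_ (R : realType) n (A : 'M[R]_n) (k : 'cV[R]_n) i :
  A *m (k *+ i) = (A *m k) *+ i.
Proof. by elim: i => [|i IH]; rewrite ?mulr0n ?mulmx0 // !mulrS mulmxDr IH. Qed.

Lemma Ann_transfer (R : realType) p q (S : set ('cV[R]_(p + q) -> R))
  (HOA : forall A g, @Opq R p q A -> S g -> S (OA A g))
  (B B' : 'M[R]_(p + q)) k P :
  @Opq R p q B -> @Opq R p q B' -> B' *m B = 1%:M ->
  Ann S (B *m k) P -> Ann S k P.
Proof.
move=> OB OB' BB A g Sg x.
have eg : g = fun y => OA B' g (B *m y).
  by apply/funext => y; rewrite /OA mulmxA BB mul1mx.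
rewrite eg.
have -> : polyT P k (fun y => OA B' g (B *m y)) x = polyT P (B *m k) (OA B' g) (B *m x).
  by rewrite /polyT; apply: eq_bigr => i _; rewrite mulmxDr mulmxMn_.
by apply: A; apply: HOA.
Qed.

Lemma Ann_ray (R : realType) p q (S : set ('cV[R]_(p + q) -> R))
  (HOA : forall A g, @Opq R p q A -> S g -> S (OA A g)) v :
  nullok v -> forall (t lam : R) P, 0 < lam ->
  Ann S ((lam * t) *: v) P -> Ann S (t *: v) P.
Proof.
move=> hv t lam P l0 A.
have [B [B' [OB OB' BB Bv]]] := hv lam l0.
apply: (Ann_transfer HOA OB OB' BB).
by rewrite -scalemxAr Bv scalerA mulrC.
Qed.

Lemma comp_poly_exp (R : realType) (P Q : {poly R}) n : (P ^+ n) \Po Q = (P \Po Q) ^+ n.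
Proof.
elim: n => [|n IH]; first by rewrite !expr0 -polyC1 comp_polyC.
by rewrite !exprS comp_polyM IH.
Qed.

Lemma null_nilp (R : realType) p q (S : set ('cV[R]_(p + q) -> R)) :
  finite_dim S -> (forall h g, S g -> S (tau h g)) ->
  (forall A g, @Opq R p q A -> S g -> S (OA A g)) ->
  forall v, nullok v ->
  exists N, forall t : R, 0 < t -> forall g, S g -> iterD N (t *: v) g = fun _ => 0.
Proof.
move=> Hfd Htau HOA v hv.
have Htau' : forall k g, S g -> S (fun x => g (x + k)) by move=> k g Sg; exact: Htau.
have [P0 [P0nz AP0]] := Ann_exists (h := v) Hfd (fun g Sg => Htau v g Sg).
have [mu [mu0 Amu mumin]] := Ann_min (ex_intro _ P0 (conj P0nz AP0)).
have c0 := Ann_min_coef0 Htau' mu0 Amu mumin.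
have Hray := Ann_ray HOA hv.
have hdiv : forall m, (0 < m)%N -> mu %| mu \Po 'X^m.
  move=> m m0; apply: (Ann_min_dvd mu0 Amu mumin).
  have Am : Ann S (m%:R *: v) mu.
    apply: (Hray _ (m%:R^-1)); first by rewrite invr_gt0 ltr0n.
    by rewrite mulVf ?pnatr_eq0 -?lt0n // scale1r.
  by move=> g Sg x; rewrite -polyT_compXn -scaler_nat; apply: Am.
have [K [r [K0 dvd]]] := unipotent_div mu0 c0 hdiv.
have A1 : Ann S v (('X^K - 1) ^+ r) := Ann_dvd Amu dvd.
have A2 : Ann S (K%:R *: v) (('X - 1) ^+ r).
  move=> g Sg x; rewrite scaler_nat polyT_compXn comp_poly_exp comp_polyB comp_polyX.
  by rewrite -polyC1 comp_polyC polyC1; apply: A1.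
exists r => t t0 g Sg; apply/funext => x; rewrite iterD_polyT.
apply: (Hray t (K%:R / t)) => //; first by rewrite divr_gt0 // ltr0n.
by rewrite divfK ?gt_eqF.
Qed.

Lemma iterD_mono (R : realType) (V : zmodType) N M (a : V) (g : V -> R) :
  iterD N a g = (fun _ => 0) -> (N <= M)%N -> iterD M a g = (fun _ => 0).
Proof.
by move=> h le; rewrite -(subnK le) iterD_addn h iterD_0.
Qed.

Lemma coord_nilp (R : realType) p q (S : set ('cV[R]_(p + q) -> R)) :
  (0 < p)%N -> (0 < q)%N ->
  finite_dim S -> (forall h g, S g -> S (tau h g)) ->
  (forall A g, @Opq R p q A -> S g -> S (OA A g)) ->
  exists N, forall (k : 'I_(p + q)) (t : R), 0 < t -> forall g, S g ->
    iterD N (t *: delta_mx k 0) g = fun _ => 0.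
Proof.
move=> hp hq Hfd Htau HOA.
have one : forall k : 'I_(p + q), exists N, forall t : R, 0 < t -> forall g, S g ->
    iterD N (t *: delta_mx k 0) g = fun _ => 0.
  move=> k.
  have comb : forall (u w : 'cV[R]_(p + q)), nullok u -> nullok w ->
      (forall t : R, (t / 2) *: u + (t / 2) *: w = t *: delta_mx k 0) ->
      exists N, forall t : R, 0 < t -> forall g, S g ->
        iterD N (t *: delta_mx k 0) g = fun _ => 0.
    move=> u w hu hw e.
    have [N1 H1] := null_nilp Hfd Htau HOA hu.
    have [N2 H2] := null_nilp Hfd Htau HOA hw.
    exists (N1 + N2) => t t0 g Sg; rewrite -e; apply: iterD_comb.
      by apply: H1; rewrite // divr_gt0.
    by apply: H2; rewrite // divr_gt0.
  case: (split_ordP k) => [i0 ek|j0 ek]; subst k.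
    pose J := rshift p (Ordinal hq).
    have Ip : (lshift q i0 < p)%N by rewrite /= ltn_ord.
    have Jp : ~~ (J < p)%N by rewrite /= -leqNgt leq_addr.
    apply: comb (nullok_u Ip Jp) (nullok_w Ip Jp) _ => t.
    by apply/matrixP => i j; rewrite !mxE; field.
  pose I := lshift q (Ordinal hp).
  have Ip : (I < p)%N by [].
  have Jp : ~~ (rshift p j0 < p)%N by rewrite /= -leqNgt leq_addr.
  apply: comb (nullok_u Ip Jp) (nullok_opp (nullok_w Ip Jp)) _ => t.
  by apply/matrixP => i j; rewrite !mxE; field.
have [Nf HN] := boolp.choice one.
exists (\sum_k Nf k) => k t t0 g Sg.
apply: (iterD_mono (HN k t t0 g Sg)).
by rewrite (bigD1 k) //= leq_addr.
Qed.

Lemma size_diff_shift (R : realType) (Q : {poly R}) (t : R) N :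
  (size Q <= N.+1)%N -> (size (Q \Po ('X + t%:P) - Q)%R <= N)%N.
Proof.
move=> sQ.
have [->|Q0] := eqVneq Q 0; first by rewrite comp_poly0 subr0 size_poly0.
have s2 : size ('X + t%:P) = 2 by rewrite size_XaddC.
have sc : size (Q \Po ('X + t%:P)) = size Q by rewrite size_comp_poly2.
have lc : lead_coef (Q \Po ('X + t%:P)) = lead_coef Q.
  by rewrite lead_coef_comp ?s2 // lead_coefXaddC expr1n mulr1.
have sp : (0 < size Q)%N by rewrite size_poly_gt0.
apply: (@leq_trans (size Q).-1); last by move: sQ sp; lia.
apply/leq_sizeP => j hj; rewrite coefB; have [->|jn] := eqVneq j (size Q).-1.
  by rewrite -{1}sc -!lead_coefE lc subrr.
have hj' : (size Q <= j)%N by move: hj jn sp; lia.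
by rewrite !nth_default ?sc // subrr.
Qed.

Lemma poly_killed (R : realType) N (Q : {poly R}) (t : R) :
  (size Q <= N)%N -> iterD N t (fun x => Q.[x]) = fun _ => 0.
Proof.
elim: N Q => [|N IH] Q sQ.
  move: sQ; rewrite leqn0 size_poly_eq0 => /eqP ->.
  by apply/funext => x; rewrite /iterD /= horner0.
rewrite iterD_D.
have -> : Dop t (fun x => Q.[x]) = fun x => (Q \Po ('X + t%:P) - Q).[x].
  by apply/funext => x; rewrite /Dop hornerD hornerN horner_comp !hornerE.
by apply: IH; apply: size_diff_shift.
Qed.

Lemma iterD_expand (R : realType) N (t : R) (phi : R -> R) x :
  iterD N t phi x = \sum_(i < N.+1) (('X - 1) ^+ N)`_i * phi (x + t *+ i).
Proof. by rewrite iterD_polyT /polyT -polyC1 size_exp_XsubC. Qed.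

Lemma coefN_XsubC1 (R : realType) N : ((('X - 1) ^+ N)`_N : R) = 1.
Proof.
have m : (('X - 1) ^+ N : {poly R}) \is monic by apply: monic_exp; rewrite -polyC1 monicXsubC.
by have := monicP m; rewrite lead_coefE -polyC1 size_exp_XsubC.
Qed.


Lemma coef0_XsubC1 (R : realType) N : ((('X - 1) ^+ N)`_0 : R) != 0.
Proof.
rewrite -horner_coef0 horner_exp !hornerE.
by rewrite expf_neq0 // oppr_eq0 oner_neq0.
Qed.

Lemma fwd_step (R : realType) N (t : R) (phi : R -> R) x :
  iterD N t phi = (fun _ => 0) -> (forall i, (i < N)%N -> phi (x + t *+ i) = 0) ->
  phi (x + t *+ N) = 0.
Proof.
move=> H hz; have := congr1 (fun f => f x) H; rewrite /= iterD_expand big_ord_recr /=.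
rewrite big1 ?add0r ?coefN_XsubC1 ?mul1r //.
by move=> i _; rewrite hz ?mulr0.
Qed.

Lemma bwd_step (R : realType) N (t : R) (phi : R -> R) x :
  iterD N t phi = (fun _ => 0) -> (forall i, (0 < i <= N)%N -> phi (x + t *+ i) = 0) ->
  phi x = 0.
Proof.
move=> H hz; have := congr1 (fun f => f x) H; rewrite /= iterD_expand big_ord_recl /=.
rewrite big1 ?addr0 ?mulr0n ?addr0; last by move=> i _; rewrite hz ?mulr0 //= ltn_ord.
by move/eqP; rewrite mulf_eq0 (negbTE (coef0_XsubC1 _ _)) /= => /eqP.
Qed.

Lemma lattice_zero (R : realType) N (t : R) (phi : R -> R) :
  iterD N t phi = (fun _ => 0) -> (forall i, (i < N)%N -> phi (t *+ i) = 0) ->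
  (forall n, phi (t *+ n) = 0) /\ (forall n, phi (- (t *+ n)) = 0).
Proof.
move=> H hz.
have F : forall n, phi (t *+ n) = 0.
  elim/ltn_ind => n IH.
  case: (ltnP n N) => [nN|Nn]; first by apply: hz.
  rewrite -(subnK Nn) mulrnDr; apply: (fwd_step H) => i iN.
  by rewrite -mulrnDr; apply: IH; move: iN Nn; lia.
split => //.
elim/ltn_ind => n IH.
case: n IH => [|n] IH; first by rewrite mulr0n oppr0; have := F 0; rewrite mulr0n.
apply: (bwd_step H) => i /andP [i0 iN].
case: (leqP i n.+1) => hi.
  have -> : - (t *+ n.+1) + t *+ i = - (t *+ (n.+1 - i)).
    by rewrite -{1}(subnK hi) mulrnDr opprD subrK.
  by apply: IH; move: i0 hi; lia.
have e : t *+ i = t *+ (i - n.+1) + t *+ n.+1 by rewrite -mulrnDr subnK // ltnW.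
by rewrite e addrCA addNr addr0 F.
Qed.

Lemma lattice_zero_int (R : realType) N (t : R) (phi : R -> R) :
  iterD N t phi = (fun _ => 0) -> (forall i, (i < N)%N -> phi (t *+ i) = 0) ->
  forall z : int, phi (z%:~R * t) = 0.
Proof.
move=> H hz; have [F G] := lattice_zero H hz.
case=> n.
  by rewrite mulrC mulr_natr F.
by rewrite NegzE intrN mulNr mulrC mulr_natr G.
Qed.

Definition lagn (R : realType) N (t : R) (i : 'I_N) : {poly R} :=
  (\prod_(j < N | j != i) ((i%:R - j%:R) * t))^-1 *:
     \prod_(j < N | j != i) ('X - (j%:R * t)%:P).

Lemma lag_eval (R : realType) N (t : R) (i k : 'I_N) : t != 0 ->
  (lagn t i).[k%:R * t] = (i == k)%:R.
Proof.
move=> t0; rewrite /lagn hornerZ horner_prod.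
under eq_bigr do rewrite hornerXsubC.
case: (eqVneq i k) => [<-|ik].
  under eq_bigr do rewrite -mulrBl.
  rewrite mulVf //; apply/prodf_neq0 => j ji; rewrite mulf_neq0 // subr_eq0 eqr_nat.
  by rewrite eq_sym.
by rewrite [X in _ * X](bigD1 k) 1?eq_sym //= subrr mul0r mulr0.
Qed.

Lemma lag_size (R : realType) N (t : R) (i : 'I_N) : (size (lagn t i) <= N)%N.
Proof.
rewrite (leq_trans (size_scale_leq _ _)) // size_prod; last first.
  by move=> j _; rewrite polyXsubC_eq0.
rewrite (eq_bigr (fun _ => 2%N)); last by move=> j _; rewrite size_XsubC.
rewrite sum_nat_const.
have : #|[pred j : 'I_N | j != i]| = N.-1.
  by rewrite -[in RHS](card_ord N) -(cardC1 i); apply: eq_card => j.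
move=> ->; have := ltn_ord i; lia.
Qed.

Definition interp (R : realType) N (t : R) (phi : R -> R) : {poly R} :=
  \sum_(i < N) phi (i%:R * t) *: lagn t i.

Lemma interp_size (R : realType) N (t : R) phi : (size (interp N t phi) <= N)%N.
Proof.
rewrite /interp; apply: (big_ind (fun P : {poly R} => (size P <= N)%N)).
- by rewrite size_poly0.
- by move=> a b ha hb; rewrite (leq_trans (size_polyD _ _)) // geq_max ha hb.
- by move=> i _; rewrite (leq_trans (size_scale_leq _ _)) // lag_size.
Qed.

Lemma interp_eval (R : realType) N (t : R) phi (k : 'I_N) : t != 0 ->
  (interp N t phi).[k%:R * t] = phi (k%:R * t).
Proof.
move=> t0; rewrite /interp horner_sum (bigD1 k) //= big1 ?addr0.
  by rewrite hornerZ lag_eval // eqxx mulr1.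
by move=> i ik; rewrite hornerZ lag_eval // (negbTE ik) mulr0.
Qed.

Lemma zero_poly (R : realType) N (Q : {poly R}) :
  (size Q <= N)%N -> (forall i, (i < N)%N -> Q.[i%:R] = 0) -> Q = 0.
Proof.
move=> sQ hz; apply/eqP; apply: contraT => Q0.
have := @max_poly_roots _ Q [seq i%:R | i <- iota 0 N] Q0.
rewrite size_map size_iota => h.
have : (N < size Q)%N.
  apply: h.
    apply/allP => x; case/mapP => i; rewrite mem_iota add0n => /andP [_ iN] ->.
    by rewrite /root hz.
  rewrite map_inj_uniq ?iota_uniq //.
  by move=> a b /eqP; rewrite eqr_nat => /eqP.
by rewrite ltnNge sQ.
Qed.

Lemma dense_zero (R : realType) (phi : R -> R) : continuous phi ->
  (forall K : nat, (0 < K)%N -> forall z : int, phi (z%:~R / K%:R) = 0) ->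
  forall x, phi x = 0.
Proof.
move=> cphi hz x; apply/eqP; apply: contraT => nz.
have e0 : 0 < `|phi x| by rewrite normr_gt0.
have := cphi x; move/fcvgrPdist_lt/(_ _ e0) => /nbhs_ballP [d /= d0 Hd].
pose K := (Num.truncn d^-1).+1.
have hK : d^-1 < K%:R by apply: truncnS_gt.
set k := K%:R in hK.
have k0 : 0 < k by rewrite ltr0n.
pose z := Num.floor (x * k).
have [h1 h2] : z%:~R <= x * k /\ x * k < z%:~R + 1.
  by have /andP [a b] := floor_itv (x * k); split => //; rewrite intrD in b.
have hb : ball x d (z%:~R / k).
  rewrite -ball_normE /ball_ /= ger0_norm; last first.
    by rewrite subr_ge0 ler_pdivrMr.
  have -> : x - z%:~R / k = (x * k - z%:~R) / k by field; rewrite gt_eqF.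
  rewrite ltr_pdivrMr //.
  have : 1 < d * k.
    by rewrite -(mulfV (lt0r_neq0 d0)) ltr_pM2l.
  lra.
have := Hd _ hb; rewrite /= hz // subr0 ltxx //.
Qed.

Lemma one_dim (R : realType) N (phi : R -> R) : continuous phi ->
  (forall t, 0 < t -> iterD N t phi = fun _ => 0) ->
  (forall i, (i < N)%N -> phi i%:R = 0) -> forall x, phi x = 0.
Proof.
move=> cphi hD hz; apply: dense_zero => // K K0.
set t := K%:R^-1.
have t0 : 0 < t by rewrite invr_gt0 ltr0n.
pose Q := interp N t phi.
pose psi := fun x => phi x - Q.[x].
have Dpsi : iterD N t psi = fun _ => 0.
  by rewrite /psi iterD_sub hD // poly_killed ?interp_size //; apply/funext => x; rewrite subr0.
have zpsi : forall i, (i < N)%N -> psi (t *+ i) = 0.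
  move=> i iN; rewrite /psi -mulr_natl.
  by rewrite (interp_eval phi (Ordinal iN)) ?gt_eqF // subrr.
have L := lattice_zero_int Dpsi zpsi.
have Q0 : Q = 0.
  apply: (zero_poly (interp_size N t phi)) => i iN.
  have := L (i * K)%N%:Z; rewrite /psi.
  have -> : ((i * K)%N%:Z)%:~R * t = i%:R.
    by rewrite -[_%:~R]/((i * K)%N%:R) natrM /t mulfK // pnatr_eq0 -lt0n.
  by rewrite hz // sub0r => /eqP; rewrite oppr_eq0 => /eqP.
move=> z; have := L z; rewrite /psi Q0 horner0 subr0.
by rewrite /t.
Qed.

Definition liftk (R : realType) n (k : 'I_n) (P : {poly R}) : mpoly.mpoly n R :=
  \sum_(j < size P) P`_j *: (@mpoly.mpolyX n R (mpoly.mnm1 k)) ^+ j.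

Lemma meval_liftk (R : realType) n (k : 'I_n) (P : {poly R}) (v : 'I_n -> R) :
  mpoly.meval v (liftk k P) = P.[v k].
Proof.
rewrite /liftk rmorph_sum horner_coef; apply: eq_bigr => j _.
by rewrite /= mpoly.mevalZ rmorphXn /= mpoly.mevalXU.
Qed.

Definition gpt (R : realType) n N (a : {ffun 'I_n -> 'I_N}) : 'cV[R]_n :=
  \col_k ((a k)%:R).
Arguments gpt {R n N} a.

Definition Lfun (R : realType) n N (f : 'cV[R]_n -> R) (x : 'cV[R]_n) : R :=
  \sum_(a : {ffun 'I_n -> 'I_N}) f (gpt a) * \prod_(k < n) (lagn 1 (a k)).[x k 0].

Lemma Lfun_poly (R : realType) n N (f : 'cV[R]_n -> R) : is_polynomial_fun (@Lfun R n N f).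
Proof.
exists (\sum_(a : {ffun 'I_n -> 'I_N}) f (gpt a) *: \prod_(k < n) liftk k (lagn 1 (a k))).
move=> x; rewrite rmorph_sum /Lfun; apply: eq_bigr => a _.
by rewrite /= mpoly.mevalZ rmorph_prod; congr (_ * _); apply: eq_bigr => k _; rewrite /= meval_liftk.
Qed.

Lemma lag1_eval (R : realType) N (i k : 'I_N) : (lagn (1 : R) i).[k%:R] = (i == k)%:R.
Proof. by rewrite -[k%:R]mulr1 lag_eval // oner_neq0. Qed.

Lemma Lfun_grid (R : realType) n N (f : 'cV[R]_n -> R) (a : {ffun 'I_n -> 'I_N}) :
  Lfun N f (gpt a) = f (gpt a).
Proof.
rewrite /Lfun (bigD1 a) //= [X in _ + X]big1 ?addr0.
  by rewrite big1 ?mulr1 // => k _; rewrite mxE lag1_eval eqxx.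
move=> b ba.
have [k bk] : exists k, b k != a k.
  apply/existsP; rewrite -negb_forall; apply: contra ba => /forallP h.
  by apply/eqP/ffunP => k; apply/eqP.
by rewrite (bigD1 k) //= mxE lag1_eval (negbTE bk) mul0r mulr0.
Qed.

Definition line (R : realType) n (x : 'cV[R]_n) (k : 'I_n) (s : R) : 'cV[R]_n :=
  \col_j (if j == k then s else x j 0).

Lemma lineE (R : realType) n (x : 'cV[R]_n) k s :
  line x k s = line x k 0 + s *: delta_mx k 0.
Proof.
apply/matrixP => j i; rewrite !mxE (ord1 i) /= eqxx andbT.
by case: eqP => _; rewrite ?mulr1 ?mulr0 ?addr0 ?add0r.
Qed.

Lemma line_self (R : realType) n (x : 'cV[R]_n) k : line x k (x k 0) = x.
Proof.
by apply/matrixP => j i; rewrite !mxE (ord1 i); case: eqP => // ->.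
Qed.

Lemma iterD_line (R : realType) n (x0 e : 'cV[R]_n) (F : 'cV[R]_n -> R) N (t : R) :
  iterD N t (fun s => F (x0 + s *: e)) = fun s => iterD N (t *: e) F (x0 + s *: e).
Proof.
apply/funext => s; rewrite !iterD_polyT /polyT; apply: eq_bigr => i _.
by rewrite scalerDl addrA scalerMnl.
Qed.

Lemma Lfun_line (R : realType) n N (f : 'cV[R]_n -> R) (x : 'cV[R]_n) (k : 'I_n) :
  exists Qp : {poly R}, (size Qp <= N)%N /\ forall s, Lfun N f (line x k s) = Qp.[s].
Proof.
exists (\sum_(a : {ffun 'I_n -> 'I_N})
  (f (gpt a) * \prod_(j < n | j != k) (lagn 1 (a j)).[x j 0]) *: lagn 1 (a k)).
split.
  apply: (big_ind (fun P : {poly R} => (size P <= N)%N)).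
  - by rewrite size_poly0.
  - by move=> u w hu hw; rewrite (leq_trans (size_polyD _ _)) // geq_max hu hw.
  - by move=> a _; rewrite (leq_trans (size_scale_leq _ _)) // lag_size.
move=> s; rewrite /Lfun horner_sum; apply: eq_bigr => a _.
rewrite hornerZ (bigD1 k) //= mxE eqxx -mulrA; congr (_ * _).
rewrite mulrC; congr (_ * _); apply: eq_bigr => j jk.
by rewrite mxE (negbTE jk).
Qed.

Lemma assemble (R : realType) n (f : 'cV[R]_n -> R) N :
  continuous f ->
  (forall (k : 'I_n) (t : R), 0 < t -> iterD N (t *: delta_mx k 0) f = fun _ => 0) ->
  is_polynomial_fun f.
Proof.
move=> cf hN.
suff claim : forall m (x : 'cV[R]_n), (forall j : 'I_n, (m <= j)%N -> exists i : 'I_N, x j 0 = i%:R) ->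
    f x = Lfun N f x.
  have [P hP] := Lfun_poly N f; exists P => x.
  by rewrite (claim n x) ?hP // => j; rewrite leqNgt ltn_ord.
elim=> [|m IH] x hx.
  have [a ha] := boolp.choice (fun j : 'I_n => hx j (leq0n j)).
  have -> : x = gpt [ffun j => a j].
    by apply/matrixP => j i; rewrite (ord1 i) !mxE ffunE ha.
  by rewrite Lfun_grid.
case: (ltnP m n) => [mn|nm]; last first.
  by apply: IH => j mj; have := ltn_ord j; move: (leq_trans nm mj); rewrite leqNgt => /negbTE ->.
pose k := Ordinal mn.
have [Qp [sQ hQ]] := Lfun_line N f x k.
pose phi := fun s => f (line x k s) - Qp.[s].
suff : forall s, phi s = 0.
  by move=> /(_ (x k 0)); rewrite /phi -hQ line_self => /eqP; rewrite subr_eq0 => /eqP.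
apply: (@one_dim R N).
- move=> s; apply: continuousB; last exact: continuous_horner.
  have -> : (fun s => f (line x k s)) = f \o (fun s => line x k 0 + s *: delta_mx k 0).
    by apply/funext => s'; rewrite /= -lineE.
  apply: continuous_comp; last exact: cf.
  apply: continuousD; first exact: cst_continuous.
  by apply: continuousZr_tmp.
- move=> t t0; rewrite /phi iterD_sub poly_killed //.
  have -> : (fun s => f (line x k s)) = fun s => f (line x k 0 + s *: delta_mx k 0).
    by apply/funext => s'; rewrite -lineE.
  by rewrite iterD_line hN //; apply/funext => s; rewrite subr0.
- move=> i iN; rewrite /phi -hQ; apply/eqP; rewrite subr_eq0; apply/eqP.
  apply: IH => j mj.
  case: (eqVneq j k) => [->|jk].
    by exists (Ordinal iN); rewrite mxE eqxx.
  rewrite mxE (negbTE jk); apply: hx.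
  have : (j : nat) != m by apply: contraNneq jk => e; apply/eqP/val_inj; rewrite /= e.
  by rewrite ltn_neqAle mj andbT eq_sym.
Qed.

Theorem mainTheorem12 (R : realType) (p q : nat) (hp : (0 < p)%N) (hq : (0 < q)%N)
  (V : set ('cV[R]_(p + q) -> R)) (f : 'cV[R]_(p + q) -> R) :
  is_subspace V ->
  finite_dim V ->
  (forall g, V g -> continuous g) ->
  (forall h g, V g -> V (tau h g)) ->
  (forall A g, @Opq R p q A -> V g -> V (OA A g)) ->
  V f ->
  is_polynomial_fun f.
Proof.
move=> _ Hfd Hcont Htau HOA Vf.
have [N HN] := coord_nilp hp hq Hfd Htau HOA.
apply: (@assemble R (p + q) f N (Hcont f Vf)) => k t t0.
exact: HN.
Qed.
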